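(* Let $\Sigma$ be a set of prime numbers, $S$ the multiplicative submonoid of $\mathbb{N}$ generated by $\Sigma$, $\mathbb{Z}[S^{-1}]\subset\mathbb{Q}$ the localization. Let $M$ be a locally compact topological $\mathbb{Z}[S^{-1}]$-module that contains a compact open subgroup and is compactly generated. Then $M\cong(\mathbb{Z}[S^{-1}])^k\times C(M)$ as topological $\mathbb{Z}[S^{-1}]$-modules for some $k\ge 0$, where $(\mathbb{Z}[S^{-1}])^k$ is discrete.
   Context: All topological groups are Hausdorff; $\mathbb{Z}[S^{-1}]$ is discrete; scalar multiplication is continuous. Compactly generated means generated as a $\mathbb{Z}[S^{-1}]$-module by a compact subset. $C(M)$ is the set of elements $x\in M$ such that the closure of the subgroup generated by $x$ is compact (a closed submodule). *)

(* Defs.v *)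
From HB Require Import structures.
From mathcomp Require Import all_boot all_order all_algebra.
From mathcomp Require Import all_classical all_reals all_analysis.
Set Implicit Arguments. Unset Strict Implicit. Unset Printing Implicit Defensive.
Import Order.TTheory GRing.Theory Num.Theory.
Local Open Scope classical_set_scope.
Local Open Scope ring_scope.

(* Z[S^-1] as a subring of rat: rationals whose (reduced) denominator has
   all its prime factors in Sig (S = monoid generated by the primes Sig). *)
Definition inZS (Sig : set nat) (q : rat) : Prop :=
  forall p : nat, prime p -> (p %| `|denq q|)%N -> Sig p.

(* A topological Z[S^-1]-module structure on a topological abelian group M,
   given by a scalar action sc (only its values at elements of Z[S^-1]
   matter).  Since Z[S^-1] is discrete, continuity of the scalar
   multiplication Z[S^-1] x M -> M amounts to continuity of each sc a. *)
Record ZSmodule (Sig : set nat) (M : topologicalZmodType)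
    (sc : rat -> M -> M) : Prop := {
  sc1 : forall x, sc 1 x = x;
  scA : forall a b x, inZS Sig a -> inZS Sig b -> sc a (sc b x) = sc (a * b) x;
  scDl : forall a b x, inZS Sig a -> inZS Sig b -> sc (a + b) x = sc a x + sc b x;
  scDr : forall a x y, inZS Sig a -> sc a (x + y) = sc a x + sc a y;
  sc_cont : forall a, inZS Sig a -> continuous (sc a)
}.

Definition loc_compact (M : topologicalType) : Prop :=
  forall x : M, exists2 U : set M, nbhs x U & compact U.

Definition has_compact_open_subgroup (M : topologicalZmodType) : Prop :=
  exists U : set M, [/\ compact U, open U, U 0 &
    forall x y, U x -> U y -> U (x - y)].

Definition ZS_compactly_generated (Sig : set nat) (M : topologicalZmodType)
    (sc : rat -> M -> M) : Prop :=
  exists K : set M, compact K /\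
    forall x : M, exists (n : nat) (a : 'I_n -> rat) (k : 'I_n -> M),
      [/\ forall i, inZS Sig (a i), forall i, K (k i) &
          x = \sum_(i < n) sc (a i) (k i)].

Definition CM (M : topologicalZmodType) : set M :=
  [set x | compact (closure [set x *~ n | n in [set: int]])].
Arguments CM {M}.

(* Main.v *)
Require Import Defs.
From HB Require Import structures.
From mathcomp Require Import all_boot all_order all_algebra.
From mathcomp Require Import all_classical all_reals all_analysis.
From mathcomp Require Import ring lra.
From Stdlib Require Import ClassicalEpsilon.
Import Order.TTheory GRing.Theory Num.Theory.
Local Open Scope classical_set_scope.
Local Open Scope ring_scope.

Section ZS.
Variable Sig : set nat.

Definition Sden (s : nat) := (0 < s)%N /\ forall p, prime p -> (p %| s)%N -> Sig p.

Lemma Sden1 : Sden 1.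
Proof. by split => // p pp; rewrite dvdn1 => /eqP p1; move: pp; rewrite p1. Qed.

Lemma SdenM s t : Sden s -> Sden t -> Sden (s * t).
Proof.
move=> [s0 hs] [t0 ht]; split; first by rewrite muln_gt0 s0.
by move=> p pp; rewrite Euclid_dvdM // => /orP[]; [apply: hs|apply: ht].
Qed.

Lemma denq_dvd (z d : int) : d != 0 -> (denq (z%:~R / d%:~R) %| d)%Z.
Proof.
move=> d0; case: divqP => [/eqP|k x k0]; first by rewrite (negPf d0).
by rewrite dvdz_mull.
Qed.

Lemma inZSP q : inZS Sig q <-> exists s, Sden s /\ exists z : int, q * s%:R = z%:~R.
Proof.
split.
  move=> h; exists `|denq q|%N; split.
    by split => //; rewrite absz_gt0 denq_neq0.
  exists (numq q); rewrite numqE; congr (_ * _).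
  by rewrite -absz_denq -pmulrn.
move=> [s [[s0 hs] [z hz]]] p pp pd; apply: hs => //.
have sn0 : (s%:R : rat) != 0 by rewrite pnatr_eq0 -lt0n.
have qE : q = z%:~R / (s%:Z)%:~R by rewrite -hz pmulrn mulfK.
have hd := @denq_dvd z s%:Z.
rewrite -qE in hd; have /hd {}hd : s%:Z != 0 by rewrite eqz_nat -lt0n s0.
apply: dvdn_trans pd _.
by move: hd; rewrite -absz_denq.
Qed.

Lemma inZS_int (z : int) : inZS Sig z%:~R.
Proof. by apply/inZSP; exists 1%N; split; [exact: Sden1|exists z; rewrite mulr1]. Qed.

Lemma inZS_nat (n : nat) : inZS Sig n%:R.
Proof. by rewrite pmulrn; apply: inZS_int. Qed.

Lemma inZS0 : inZS Sig 0.
Proof. exact: (inZS_nat 0). Qed.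
Lemma inZS1 : inZS Sig 1.
Proof. exact: (inZS_nat 1). Qed.

Lemma inZSM a b : inZS Sig a -> inZS Sig b -> inZS Sig (a * b).
Proof.
move=> /inZSP [s [hs [z hz]]] /inZSP [t [ht [w hw]]].
apply/inZSP; exists (s * t)%N; split; first exact: SdenM.
exists (z * w); rewrite natrM intrM -hz -hw; ring.
Qed.

Lemma inZSD a b : inZS Sig a -> inZS Sig b -> inZS Sig (a + b).
Proof.
move=> /inZSP [s [hs [z hz]]] /inZSP [t [ht [w hw]]].
apply/inZSP; exists (s * t)%N; split; first exact: SdenM.
exists (z * t%:Z + w * s%:Z); rewrite natrM intrD !intrM !pmulrn -hz -hw; ring.
Qed.

Lemma inZSN a : inZS Sig a -> inZS Sig (- a).
Proof. by move=> h; rewrite -mulN1r; apply: inZSM => //; apply: (inZS_int (-1)). Qed.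

Lemma inZSB a b : inZS Sig a -> inZS Sig b -> inZS Sig (a - b).
Proof. by move=> ha hb; apply: inZSD => //; apply: inZSN. Qed.

Lemma principal (P : rat -> Prop) :
  (forall q, P q -> inZS Sig q) ->
  (forall a b, P a -> P b -> P (a + b)) ->
  (forall a b, inZS Sig a -> P b -> P (a * b)) ->
  (exists a, P a /\ a != 0) ->
  exists d, [/\ P d, d != 0 & forall q, P q -> inZS Sig (q / d)].
Proof.
move=> PZ PD PM [a [Pa a0]].
have Pint q : P q -> exists2 z : int, P z%:~R & exists s, Sden s /\ q * s%:R = z%:~R.
  move=> Pq; have /inZSP [s [hs [z hz]]] := PZ q Pq.
  exists z; last by exists s.
  by rewrite -hz mulrC; apply: PM => //; apply: inZS_nat.
have Pabs (z : int) : P z%:~R -> P (`|z|%N)%:R.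
  move=> Pz; rewrite pmulrn abszE.
  case: (ger0P z) => _; first by [].
  by rewrite -mulN1r intrM; apply: PM => //; apply: (inZS_int (-1)).
have ex : exists n, (0 < n)%N && `[< P n%:R >].
  have [z Pz [s [[s0 _] hz]]] := Pint a Pa.
  exists `|z|%N; apply/andP; split; last by apply/asboolP; apply: Pabs.
  rewrite absz_gt0; apply: contraNneq a0 => z0.
  move: hz; rewrite z0 mulr0z => /eqP; rewrite mulf_eq0 pnatr_eq0 -[(s == 0)%N]negbK -lt0n s0 orbF.
  by [].
case: (ex_minnP ex) => d /andP [d0 /asboolP Pd] dmin.
exists d%:R; split => //; first by rewrite pnatr_eq0 -lt0n.
move=> q Pq.
have [z Pz [s [hs hz]]] := Pint q Pq.
have [u [v huv]] := Bezoutz d%:Z z.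
have Pg : P (gcdz d z)%:~R.
  rewrite -huv intrD !intrM; apply: PD; apply: PM => //; exact: inZS_int.
have g0 : (0 < gcdn d `|z|)%N by rewrite gcdn_gt0 d0.
have := dmin (gcdn d `|z|); rewrite g0 /= => /(_ (asboolT _)).
have gE : (gcdz d z)%:~R = (gcdn d `|z|)%:R :> rat by rewrite -pmulrn.
rewrite -gE => /(_ Pg) dle.
have gd : gcdn d `|z| = d.
  by apply/eqP; rewrite eqn_leq dle andbT dvdn_leq // dvdn_gcdl.
have : (d %| `|z|)%N by rewrite -gd dvdn_gcdr.
move=> /dvdnP [m hm].
apply/inZSP; exists s; split => //.
exists ((sgz z) * m%:Z).
have qE : q * s%:R = z%:~R by [].
rewrite mulrAC qE.
have zE : z = sgz z * `|z|%:Z by apply: intEsg.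
rewrite {1}zE hm intrM -pmulrn natrM mulrA mulfK ?pnatr_eq0 -?lt0n //.
by rewrite intrM pmulrn.
Qed.

End ZS.

Section SC.
Variables (Sig : set nat) (M : topologicalZmodType) (sc : rat -> M -> M).
Hypothesis Z : ZSmodule Sig sc.
Let scDr := @scDr Sig M sc Z.
Let scDl := @scDl Sig M sc Z.
Let scA := @scA Sig M sc Z.
Let sc1 := @sc1 Sig M sc Z.

Lemma sc0l x : sc 0 x = 0.
Proof.
have h := scDl 0 0 x (inZS0 Sig) (inZS0 Sig); rewrite addr0 in h.
by apply: (addrI (sc 0 x)); rewrite addr0 -h.
Qed.

Lemma sc0r a : inZS Sig a -> sc a 0 = 0.
Proof.
move=> ha; have h := scDr a 0 0 ha; rewrite addr0 in h.
by apply: (addrI (sc a 0)); rewrite addr0 -h.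
Qed.

Lemma scNl a x : inZS Sig a -> sc (- a) x = - sc a x.
Proof.
move=> ha; have h := scDl a (- a) x ha ((@inZSN Sig a ha)); rewrite subrr sc0l in h.
by apply: (addrI (sc a x)); rewrite subrr h.
Qed.

Lemma scNr a x : inZS Sig a -> sc a (- x) = - sc a x.
Proof.
move=> ha; have h := scDr a x (- x) ha; rewrite subrr sc0r // in h.
by apply: (addrI (sc a x)); rewrite subrr h.
Qed.

Lemma scBr a x y : inZS Sig a -> sc a (x - y) = sc a x - sc a y.
Proof. by move=> ha; rewrite scDr // scNr. Qed.

Lemma scBl a b x : inZS Sig a -> inZS Sig b -> sc (a - b) x = sc a x - sc b x.
Proof. by move=> ha hb; rewrite scDl ?scNl //; exact: (@inZSN Sig b hb). Qed.

Lemma sc_nat n x : sc n%:R x = x *+ n.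
Proof.
elim: n => [|n IH]; first by rewrite sc0l.
by rewrite -addn1 natrD (scDl _ _ _ (inZS_nat Sig n) (inZS1 Sig)) IH sc1 addn1 mulrSr.
Qed.

Lemma sc_int (z : int) x : sc z%:~R x = x *~ z.
Proof.
case: z => n; first exact: sc_nat.
rewrite NegzE mulrNz scNl; last by apply: inZS_nat.
by rewrite -pmulrn sc_nat.
Qed.

Lemma sc_sum a n (F : 'I_n -> M) : inZS Sig a ->
  sc a (\sum_(i < n) F i) = \sum_(i < n) sc a (F i).
Proof.
move=> ha; apply: (big_morph (sc a)) => [x y|]; first exact: scDr.
exact: sc0r.
Qed.

Lemma sc_sumD n (c d : 'I_n -> rat) (e : 'I_n -> M) :
  (forall i, inZS Sig (c i)) -> (forall i, inZS Sig (d i)) ->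
  \sum_(i < n) sc (c i + d i) (e i) =
  \sum_(i < n) sc (c i) (e i) + \sum_(i < n) sc (d i) (e i).
Proof.
by move=> hc hd; rewrite -big_split; apply: eq_bigr => i _; rewrite scDl.
Qed.

Lemma sc_sumB n (c d : 'I_n -> rat) (e : 'I_n -> M) :
  (forall i, inZS Sig (c i)) -> (forall i, inZS Sig (d i)) ->
  \sum_(i < n) sc (c i - d i) (e i) =
  \sum_(i < n) sc (c i) (e i) - \sum_(i < n) sc (d i) (e i).
Proof.
move=> hc hd; rewrite -sumrN -big_split; apply: eq_bigr => i _.
by rewrite scBl.
Qed.

Lemma sc_sumM a n (c : 'I_n -> rat) (e : 'I_n -> M) : inZS Sig a ->
  (forall i, inZS Sig (c i)) ->
  \sum_(i < n) sc (a * c i) (e i) = sc a (\sum_(i < n) sc (c i) (e i)).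
Proof.
move=> ha hc; rewrite sc_sum //; apply: eq_bigr => i _; by rewrite scA.
Qed.

Lemma sc_sum0 n (e : 'I_n -> M) : \sum_(i < n) sc 0 (e i) = 0.
Proof. by rewrite big1 // => i _; rewrite sc0l. Qed.

End SC.

Set Implicit Arguments. Unset Strict Implicit.
Lemma addc_continuous (M : topologicalZmodType) (c : M) : continuous (fun y : M => y + c).
Proof.
move=> x; apply: (@continuous_comp _ _ _ (fun y => (y, c)) (fun z : M * M => z.1 + z.2)); last exact: add_continuous.
by apply: cvg_pair; [exact: cvg_id|exact: cvg_cst].
Qed.

Section Topo.
Variables (M : topologicalZmodType) (U : set M).
Hypothesis hM : hausdorff_space M.
Hypothesis Uc : compact U.
Hypothesis Uo : open U.
Hypothesis U0 : U 0.
Hypothesis UB : forall x y, U x -> U y -> U (x - y).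

Lemma UN x : U x -> U (- x).
Proof. by move=> ?; rewrite -sub0r; apply: UB. Qed.

Lemma UD x y : U x -> U y -> U (x + y).
Proof. by move=> ? ?; rewrite -[y]opprK; apply: UB => //; apply: UN. Qed.

Lemma UMn x n : U x -> U (x *+ n).
Proof. by move=> ?; elim: n => [|n IH]; rewrite ?mulr0n // mulrS; apply: UD. Qed.

Lemma UMz x z : U x -> U (x *~ z).
Proof. by move=> ?; case: z => n; rewrite ?NegzE ?mulrNz; [apply: UMn|apply/UN/UMn]. Qed.

Lemma nbhsU x : nbhs x [set y | U (y - x)].
Proof.
have c := @addc_continuous M (- x) x.
have : nbhs (x - x) U by rewrite subrr; apply: open_nbhs_nbhs.
by move/c.
Qed.

Definition Cp x := exists2 n, (0 < n)%N & U (x *+ n).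

Lemma CM_Cp x : CM x -> Cp x.
Proof.
move=> cH; rewrite /CM /= in cH; set H := closure _ in cH.
have FH : \forall n \near \oo, H (x *+ n).
  by apply: nearW => n; apply: subset_closure; exists n%:Z.
have [z [_ cz]] := cH ((fun n : nat => x *+ n) @ \oo) _ FH.
have nb := nbhsU z.
have F1 : \forall n \near \oo, [set x *+ n | n in [set n | (0 <= n)%N]] (x *+ n).
  by apply: nearW => n; exists n.
have [y [[n1 hn1 <-] Un1]] := cz _ _ F1 nb.
have F2 : \forall n \near \oo, [set x *+ n | n in [set n | (n1 < n)%N]] (x *+ n).
  by exists n1.+1 => // n /= hn; exists n.
have [y2 [[n2 hn2 <-] Un2]] := cz _ _ F2 nb.
exists (n2 - n1)%N; first by rewrite subn_gt0.
have h := UB Un2 Un1; rewrite /= opprB addrA subrK in h.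
by rewrite mulrnBr // ltnW.
Qed.

Lemma compact_shift c : compact [set y | U (y - c)].
Proof.
have -> : [set y | U (y - c)] = (fun y => y + c) @` U.
  apply/seteqP; split => y.
    by move=> h; exists (y - c) => //; rewrite subrK.
  by case=> u Uu <-; rewrite /= addrK.
apply: continuous_compact => //; apply: continuous_subspaceT.
exact: addc_continuous.
Qed.

Lemma compact_Fn x n : compact [set y | exists2 r, (r < n)%N & U (y - x *+ r)].
Proof.
elim: n => [|n IH].
  have -> : [set y | exists2 r, (r < 0)%N & U (y - x *+ r)] = set0 by apply/seteqP; split => y // [].
  exact: compact0.
have -> : [set y | exists2 r, (r < n.+1)%N & U (y - x *+ r)] =
  [set y | exists2 r, (r < n)%N & U (y - x *+ r)] `|` [set y | U (y - x *+ n)].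
  apply/seteqP; split => y.
    move=> [r]; rewrite ltnS leq_eqVlt => /orP[/eqP->|hr] h; [by right|by left; exists r].
  by case=> [[r hr h]|h]; [exists r => //; apply: ltnW|exists n].
by apply: compactU => //; apply: compact_shift.
Qed.

Lemma Cp_CM x : Cp x -> CM x.
Proof.
move=> [n n0 hn]; rewrite /CM /=.
have cF := @compact_Fn x n.
have clF := compact_closed hM cF.
eapply subclosed_compact; [exact: closed_closure|exact: cF|].
set F := [set y | _] in clF *.
rewrite [X in _ `<=` X](closure_id F).1 //; apply: closureS.
move=> _ [k _ <-].
have n0' : n%:Z != 0 by rewrite eqz_nat -lt0n.
have r0 := modz_ge0 k n0'.
have rn : (0 < n%:Z)%R -> ((k %% n%:Z)%Z < n%:Z)%R by apply: ltz_pmod.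
have [r rE] : exists r : nat, (k %% n%:Z)%Z = r%:Z.
  by exists `|(k %% n%:Z)%Z|%N; rewrite gez0_abs.
exists r.
  by move: (rn n0); rewrite rE ltz_nat.
rewrite {1}(divz_eq k n%:Z) rE mulrzDr /= addrK.
by rewrite mulrC mulrzA -pmulrn; apply: UMz.
Qed.
End Topo.

Section CpProps.
Variables (Sig : set nat) (M : topologicalZmodType) (sc : rat -> M -> M) (U : set M).
Hypothesis Z : ZSmodule Sig sc.
Hypothesis hM : hausdorff_space M.
Hypothesis Uc : compact U.
Hypothesis Uo : open U.
Hypothesis U0 : U 0.
Hypothesis UB : forall x y, U x -> U y -> U (x - y).

Local Notation Cp := (Cp U).
Let sc0l := @sc0l Sig M sc Z.
Let sc0r := @sc0r Sig M sc Z.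
Let scNl := @scNl Sig M sc Z.
Let scNr := @scNr Sig M sc Z.
Let scBr := @scBr Sig M sc Z.
Let scBl := @scBl Sig M sc Z.
Let sc_nat := @sc_nat Sig M sc Z.
Let sc_int := @sc_int Sig M sc Z.
Let sc_sum := @sc_sum Sig M sc Z.
Let sc_sumD := @sc_sumD Sig M sc Z.
Let sc_sumB := @sc_sumB Sig M sc Z.
Let sc_sumM := @sc_sumM Sig M sc Z.
Let sc_sum0 := @sc_sum0 Sig M sc Z.

Lemma CpU x : U x -> Cp x.
Proof. by move=> h; exists 1%N. Qed.

Lemma Cp0 : Cp 0.
Proof. exact: CpU. Qed.

Lemma CpB x y : Cp x -> Cp y -> Cp (x - y).
Proof.
move=> [n n0 hn] [m m0 hm]; exists (n * m)%N; first by rewrite muln_gt0 n0.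
rewrite mulrnBl mulrnA; apply: UB; first exact: UMn.
by rewrite mulnC mulrnA; apply: UMn.
Qed.

Lemma CpN x : Cp x -> Cp (- x).
Proof. by move=> h; rewrite -sub0r; apply: CpB => //; apply: Cp0. Qed.

Lemma CpD x y : Cp x -> Cp y -> Cp (x + y).
Proof. by move=> hx hy; rewrite -[y]opprK; apply: CpB => //; apply: CpN. Qed.

Lemma Cp_mulz x z : Cp x -> Cp (x *~ z).
Proof.
move=> [n n0 hn]; exists n => //.
by rewrite pmulrn -mulrzA mulrC mulrzA -pmulrn; apply: UMz.
Qed.

Lemma Cp_mulz_inv x z : z != 0 -> Cp (x *~ z) -> Cp x.
Proof.
case: z => m hz [n n0 hn].
  exists (m * n)%N; first by rewrite muln_gt0 n0 andbT lt0n.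
  by rewrite mulrnA.
exists (m.+1 * n)%N; first by rewrite muln_gt0 n0.
rewrite mulrnA; rewrite NegzE mulrNz mulNrn in hn.
by rewrite -[_ *+ n]opprK; apply: UN.
Qed.

Lemma sc_mulz a x z : inZS Sig a -> sc a (x *~ z) = sc a x *~ z.
Proof.
move=> ha.
have hn : forall n, sc a (x *+ n) = sc a x *+ n.
  elim=> [|n IH]; first by rewrite !mulr0n sc0r.
  by rewrite !mulrS (scDr Z) // IH.
case: z => n; first exact: hn.
by rewrite !NegzE !mulrNz scNr // hn.
Qed.

Lemma Cp_sc a x : inZS Sig a -> Cp x -> Cp (sc a x).
Proof.
move=> ha hx; apply: (@CM_Cp M U Uo U0 UB).
move: (@Cp_CM M U hM Uc U0 UB x hx); rewrite /CM /= => cH.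
set H := closure _ in cH.
have cI : compact (sc a @` H).
  apply: continuous_compact => //; apply: continuous_subspaceT; exact: (sc_cont Z).
have clI := compact_closed hM cI.
eapply subclosed_compact; [exact: closed_closure|exact: cI|].
set F := sc a @` H in clI *.
rewrite [X in _ `<=` X](closure_id F).1 //; apply: closureS.
move=> _ [k _ <-]; exists (x *~ k); last by rewrite /= sc_mulz.
by apply: subset_closure; exists k.
Qed.

Lemma Cp_sat a x : inZS Sig a -> a != 0 -> Cp (sc a x) -> Cp x.
Proof.
move=> ha a0 h.
have /inZSP [s [[s0 _] [z hz]]] := ha.
have h2 : Cp (sc s%:R (sc a x)) by apply: Cp_sc => //; apply: inZS_nat.
rewrite (scA Z) in h2; [|by apply: inZS_nat|by []].
rewrite mulrC hz sc_int in h2.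
apply: (@Cp_mulz_inv x z) => //.
apply: contraNneq a0 => z0; move: hz; rewrite z0 mulr0z => /eqP.
by rewrite mulf_eq0 pnatr_eq0 => /orP[// | /eqP s00]; move: s0; rewrite s00.
Qed.

End CpProps.

Unset Implicit Arguments. Set Strict Implicit.

Lemma G2 (M : zmodType) (z w P Q : M) : z - (P + Q) = (z - (w + Q)) + (w - P).
Proof. by rewrite !opprD !addrA [z - w - Q + w]addrAC subrK addrAC. Qed.
Lemma G4 (M : zmodType) (a b c : M) : a + b = a + c + (b - c).
Proof. by rewrite addrACA subrr addr0. Qed.
Lemma G5 (M : zmodType) (z1 z2 a b : M) : (z1 + z2) - (a + b) = (z1 - a) + (z2 - b).
Proof. by rewrite opprD addrACA. Qed.

Section Alg.
Variables (Sig : set nat) (M : topologicalZmodType) (sc : rat -> M -> M) (C : set M).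
Hypothesis Z : ZSmodule Sig sc.
Hypothesis C0 : C 0.
Hypothesis CB : forall x y, C x -> C y -> C (x - y).
Hypothesis Csc : forall a x, inZS Sig a -> C x -> C (sc a x).
Hypothesis Csat : forall a x, inZS Sig a -> a != 0 -> C (sc a x) -> C x.

Let scDr := scDr Z.
Let scDl := scDl Z.
Let scA := scA Z.
Let sc1 := sc1 Z.
Let sc0l := @sc0l Sig M sc Z.
Let sc0r := @sc0r Sig M sc Z.
Let scNl := @scNl Sig M sc Z.
Let scNr := @scNr Sig M sc Z.
Let scBr := @scBr Sig M sc Z.
Let scBl := @scBl Sig M sc Z.
Let sc_sum := @sc_sum Sig M sc Z.
Let sc_sumD := @sc_sumD Sig M sc Z.
Let sc_sumB := @sc_sumB Sig M sc Z.
Let sc_sumM := @sc_sumM Sig M sc Z.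
Let sc_sum0 := @sc_sum0 Sig M sc Z.

Lemma CN x : C x -> C (- x).
Proof. by move=> h; rewrite -sub0r; apply: CB. Qed.

Lemma CD x y : C x -> C y -> C (x + y).
Proof. by move=> hx hy; rewrite -[y]opprK; apply: CB => //; apply: CN. Qed.

Definition comb k (c : 'I_k -> rat) (e : 'I_k -> M) := \sum_(i < k) sc (c i) (e i).
Definition ZSv k (c : 'I_k -> rat) := forall i, inZS Sig (c i).
Definition subm (L : set M) :=
  [/\ forall x, C x -> L x, forall x y, L x -> L y -> L (x + y) &
      forall a x, inZS Sig a -> L x -> L (sc a x)].
Definition spans (L : set M) k (e : 'I_k -> M) :=
  forall x, L x -> exists c, ZSv k c /\ C (x - comb k c e).
Definition indep k (e : 'I_k -> M) :=
  forall c, ZSv k c -> C (comb k c e) -> forall i, c i = 0.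
Definition basis (L : set M) k (e : 'I_k -> M) :=
  [/\ forall i, L (e i), spans L k e & indep k e].

Lemma ZSvD k (c d : 'I_k -> rat) : ZSv k c -> ZSv k d -> ZSv k (fun i => c i + d i).
Proof. by move=> hc hd i; apply: inZSD. Qed.
Lemma ZSvB k (c d : 'I_k -> rat) : ZSv k c -> ZSv k d -> ZSv k (fun i => c i - d i).
Proof. by move=> hc hd i; apply: inZSB. Qed.
Lemma ZSvM k a (c : 'I_k -> rat) : inZS Sig a -> ZSv k c -> ZSv k (fun i => a * c i).
Proof. by move=> ha hc i; apply: inZSM. Qed.
Lemma ZSv0 k : ZSv k (fun _ => 0).
Proof. by move=> i; apply: inZS0. Qed.

Lemma combD k (c d : 'I_k -> rat) e : ZSv k c -> ZSv k d ->
  comb k (fun i => c i + d i) e = comb k c e + comb k d e.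
Proof. exact: sc_sumD. Qed.
Lemma combB k (c d : 'I_k -> rat) e : ZSv k c -> ZSv k d ->
  comb k (fun i => c i - d i) e = comb k c e - comb k d e.
Proof. exact: sc_sumB. Qed.
Lemma combM k a (c : 'I_k -> rat) e : inZS Sig a -> ZSv k c ->
  comb k (fun i => a * c i) e = sc a (comb k c e).
Proof. exact: sc_sumM. Qed.
Lemma comb0 k e : comb k (fun _ => 0) e = 0.
Proof. exact: sc_sum0. Qed.

Lemma subm_N L x : subm L -> L x -> L (- x).
Proof.
case=> _ _ hs Lx; have := hs (-1) x (inZSN Sig 1 (inZS1 Sig)) Lx.
by rewrite scNl ?sc1 //; apply: inZS1.
Qed.

Lemma subm_B L x y : subm L -> L x -> L y -> L (x - y).
Proof. by move=> sL Lx Ly; case: (sL) => _ hD _; apply: hD => //; apply: subm_N. Qed.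

Lemma subm_sum L n (F : 'I_n -> M) : subm L -> (forall i, L (F i)) -> L (\sum_(i < n) F i).
Proof.
move=> [hC hD _] hF; apply: (big_ind L) => //; first exact: hC.
Qed.

Lemma subm_comb L k c e : subm L -> ZSv k c -> (forall i, L (e i)) -> L (comb k c e).
Proof.
move=> sL hc he; apply: subm_sum => // i.
by case: sL => _ _ hs; apply: hs.
Qed.

Lemma subm_C : subm C.
Proof. split; [by []|exact: CD|exact: Csc]. Qed.

Section Coord.
Variables (L : set M) (k : nat) (e : 'I_k -> M).
Hypothesis sL : subm L.
Hypothesis bL : basis L k e.

Definition coord (x : M) : 'I_k -> rat :=
  epsilon (inhabits (fun _ => 0)) (fun c => ZSv k c /\ C (x - comb k c e)).

Lemma coord_spec x : L x -> ZSv k (coord x) /\ C (x - comb k (coord x) e).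
Proof.
move=> Lx; case: bL => _ hs _.
exact: (epsilon_spec (inhabits (fun _ => 0)) (fun c => ZSv k c /\ C (x - comb k c e)) (hs x Lx)).
Qed.

Lemma coord_uniq x c : L x -> ZSv k c -> C (x - comb k c e) -> coord x = c.
Proof.
move=> Lx hc hC; have [h1 h2] := coord_spec _ Lx.
apply/funext => i; apply/eqP; rewrite -subr_eq0; apply/eqP.
case: bL => _ _ hi; apply: (hi (fun i => coord x i - c i)); first exact: ZSvB.
rewrite combB //.
have -> : comb k (coord x) e - comb k c e = (x - comb k c e) - (x - comb k (coord x) e).
  have H : forall u v w : M, (w - u) - (w - v) = v - u.
    by move=> u v w; rewrite opprB addrC addrA subrK.
  by rewrite H.
exact: CB.
Qed.

Lemma coordZS x : L x -> ZSv k (coord x).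
Proof. by case/coord_spec. Qed.

Lemma coordD x y : L x -> L y -> coord (x + y) = (fun i => coord x i + coord y i).
Proof.
move=> Lx Ly; have [hx cx] := coord_spec _ Lx; have [hy cy] := coord_spec _ Ly.
apply: coord_uniq; first by case: sL => _ hD _; apply: hD.
  exact: ZSvD.
rewrite combD // opprD addrACA; exact: CD.
Qed.

Lemma coordZ a x : inZS Sig a -> L x -> coord (sc a x) = (fun i => a * coord x i).
Proof.
move=> ha Lx; have [hx cx] := coord_spec _ Lx.
apply: coord_uniq; first by case: sL => _ _ hs; apply: hs.
  exact: ZSvM.
by rewrite combM // -scBr //; apply: Csc.
Qed.

Lemma coordC x : C x -> coord x = (fun _ => 0).
Proof.
move=> Cx; apply: coord_uniq; first by case: sL => hC _ _; apply: hC.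
  exact: ZSv0.
by rewrite comb0 subr0.
Qed.

Lemma coord_comb c : ZSv k c -> coord (comb k c e) = c.
Proof.
move=> hc; apply: coord_uniq => //; last by rewrite subrr.
by apply: subm_comb => //; case: bL.
Qed.

Lemma coord_eq x : L x -> C (x - comb k (coord x) e).
Proof. by case/coord_spec. Qed.
End Coord.


Definition ext T k (f : 'I_k -> T) (y : T) : 'I_k.+1 -> T :=
  fun i => if (insub (val i) : option 'I_k) is Some j then f j else y.
Arguments ext {T k}.

Lemma ext_widen T k f y j : @ext T k f y (widen_ord (leqnSn k) j) = f j.
Proof. by rewrite /ext /= valK. Qed.

Lemma ext_max T k f y : @ext T k f y ord_max = y.
Proof. by rewrite /ext /= insubF // ltnn. Qed.

Lemma ord_cases k (i : 'I_k.+1) : (exists j, i = widen_ord (leqnSn k) j) \/ i = ord_max.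
Proof.
case: (ltnP i k) => h; first by left; exists (Ordinal h); apply: val_inj.
right; apply: val_inj => /=; apply/eqP; rewrite eqn_leq h andbT -ltnS; exact: ltn_ord.
Qed.

Lemma comb_recr k c e : comb k.+1 c e =
  comb k (fun j => c (widen_ord (leqnSn k) j)) (fun j => e (widen_ord (leqnSn k) j))
  + sc (c ord_max) (e ord_max).
Proof. by rewrite /comb big_ord_recr. Qed.

Lemma comb_ext k c t e y : comb k.+1 (ext c t) (ext e y) = comb k c e + sc t y.
Proof.
rewrite comb_recr !ext_max; congr (_ + _).
by apply: eq_bigr => i _; rewrite !ext_widen.
Qed.

Lemma ZSv_ext k c t : ZSv k c -> inZS Sig t -> ZSv k.+1 (ext c t).
Proof.
by move=> hc ht i; case: (ord_cases _ i) => [[j ->]|->]; rewrite ?ext_widen ?ext_max.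
Qed.

Lemma ZSv_widen k (c : 'I_k.+1 -> rat) : ZSv k.+1 c -> ZSv k (fun j => c (widen_ord (leqnSn k) j)).
Proof. by move=> hc j. Qed.

Lemma thmA r : forall L (phi : nat -> M -> rat), subm L ->
  (forall j x y, L x -> L y -> phi j (x + y) = phi j x + phi j y) ->
  (forall j a x, inZS Sig a -> L x -> phi j (sc a x) = a * phi j x) ->
  (forall j x, C x -> phi j x = 0) ->
  (forall j x, L x -> inZS Sig (phi j x)) ->
  (forall x, L x -> (forall j, (j < r)%N -> phi j x = 0) -> C x) ->
  exists k (e : 'I_k -> M), basis L k e.
Proof.
elim: r => [|r IH] L phi sL pD pZ pC pS pK.
  exists 0%N, (fun _ => 0); split.
  - by case.
  - move=> x Lx; exists (fun _ => 0); split; first exact: ZSv0.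
    by rewrite /comb big_ord0 subr0; apply: pK.
  - by move=> c _ _; case.
set L' := [set x | L x /\ phi r x = 0].
have sL' : subm L'.
  case: sL => hC hD hS; split.
  - by move=> x Cx; split; [apply: hC | apply: pC].
  - move=> x y [Lx px] [Ly py]; split; first exact: hD.
    by rewrite pD // px py addr0.
  - move=> a x ha [Lx px]; split; first exact: hS.
    by rewrite pZ // px mulr0.
have [k [e' [he' hs' hi']]] : exists k (e : 'I_k -> M), basis L' k e.
  apply: (IH L' phi sL').
  - by move=> j x y [Lx _] [Ly _]; apply: pD.
  - by move=> j a x ha [Lx _]; apply: pZ.
  - by [].
  - by move=> j x [Lx _]; apply: pS.
  - move=> x [Lx px] h; apply: pK => // j.
    by rewrite ltnS leq_eqVlt => /orP[/eqP->|]; [exact: px|exact: h].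
case: (pselect (exists x, L x /\ phi r x != 0)) => [hex|hno]; last first.
  exists k, e'; split.
  - by move=> i; case: (he' i).
  - move=> x Lx; apply: hs'; split => //.
    apply/eqP; apply: contra_notT hno => h; exists x; split => //.
  - exact: hi'.
case: (sL) => hC hD hS.
have [d [[y Ly yd] d0 hd]] := principal Sig [set q | exists2 x, L x & phi r x = q]
   (fun q '(ex_intro2 x Lx hx) => eq_ind _ (inZS Sig) (pS r x Lx) q hx)
   (fun a b '(ex_intro2 x Lx hx) '(ex_intro2 z Lz hz) =>
        ex_intro2 _ _ (x + z) (hD x z Lx Lz) (eq_trans (pD r x z Lx Lz) (f_equal2 +%R hx hz)))
   (fun a b ha '(ex_intro2 x Lx hx) =>
        ex_intro2 _ _ (sc a x) (hS a x ha Lx) (eq_trans (pZ r a x ha Lx) (f_equal (GRing.mul a) hx)))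
   (let '(ex_intro x (conj Lx px)) := hex in ex_intro _ (phi r x) (conj (ex_intro2 _ _ x Lx erefl) px)).
exists k.+1, (ext e' y); split.
- move=> i; case: (ord_cases _ i) => [[j ->]|->]; rewrite ?ext_widen ?ext_max //.
  by case: (he' j).
- move=> x Lx.
  set t := phi r x / d.
  have ht : inZS Sig t by apply: hd; exists x.
  have L'x : L' (x - sc t y).
    split; first by apply: subm_B => //; apply: hS.
    rewrite -scNl // pD //; last by apply: hS => //; apply: inZSN.
    by rewrite pZ ?yd; [rewrite mulNr divfK // subrr|apply: inZSN|].
  have [c' [hc' Cc']] := hs' _ L'x.
  exists (ext c' t); split; first exact: ZSv_ext.
  rewrite comb_ext.
  have -> : x - (comb k c' e' + sc t y) = x - sc t y - comb k c' e'.
    by rewrite opprD addrA addrAC.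
  exact: Cc'.
- move=> c hc Cc.
  rewrite comb_recr in Cc.
  set c' := fun j => c (widen_ord (leqnSn k) j) in Cc.
  have e'E : (fun j => ext e' y (widen_ord (leqnSn k) j)) = e'.
    by apply/funext => j; rewrite ext_widen.
  rewrite e'E ext_max in Cc.
  have hc' : ZSv k c' by move=> j; apply: hc.
  have Lc : L' (comb k c' e') by apply: subm_comb.
  have t0 : c ord_max = 0.
    have := pC r _ Cc; rewrite pD; [|exact: Lc.1|by apply: hS].
    rewrite Lc.2 add0r pZ // yd => /eqP; rewrite mulf_eq0 (negPf d0) orbF.
    by move/eqP.
  rewrite t0 sc0l addr0 in Cc.
  have := hi' c' hc' Cc => hz i.
  by case: (ord_cases _ i) => [[j ->]|->] //; apply: hz.
Qed.

Definition Lx m (x : 'I_m -> M) := [set z | exists a, ZSv m a /\ C (z - comb m a x)].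

Lemma subm_Lx m x : subm (Lx m x).
Proof.
split.
- move=> z Cz; exists (fun _ => 0); split; first exact: ZSv0.
  by rewrite comb0 subr0.
- move=> z1 z2 [a1 [h1 C1]] [a2 [h2 C2]]; exists (fun i => a1 i + a2 i); split.
    exact: ZSvD.
  rewrite combD // opprD addrACA; exact: CD.
- move=> b z hb [a [ha Ca]]; exists (fun i => b * a i); split; first exact: ZSvM.
  by rewrite combM // -scBr //; apply: Csc.
Qed.

Lemma Lx_gen m x i : Lx m x (x i).
Proof.
exists (fun j => if j == i then 1 else 0); split.
  by move=> j; case: (j == i); [apply: inZS1|apply: inZS0].
rewrite /comb (bigD1 i) //= eqxx sc1 big1 ?addr0 ?subrr //.
by move=> j /negPf ->; rewrite sc0l.
Qed.

Lemma gens m (x : 'I_m -> M) : exists k (e : 'I_k -> M), basis (Lx m x) k e.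
Proof.
elim: m x => [|m IH] x.
  exists 0%N, (fun _ => 0); split; [by case | | by move=> c _ _; case].
  move=> z [a [_ hz]]; exists (fun _ => 0); split; first exact: ZSv0.
  by move: hz; rewrite /comb !big_ord0.
set x' := fun j => x (widen_ord (leqnSn m) j).
set y := x ord_max.
set L' := Lx m x'.
have sL' : subm L' := subm_Lx m x'.
have [k [e bL]] := IH x'.
case: (bL) => he hs hi.
have L'sub : forall z, L' z -> Lx m.+1 x z.
  move=> z [a [ha hz]]; exists (ext a 0); split; first by apply: ZSv_ext => //; apply: inZS0.
  rewrite comb_recr ext_max sc0l addr0.
  have -> : (fun j => ext a 0 (widen_ord (leqnSn m) j)) = a.
    by apply/funext => j; rewrite ext_widen.
  exact: hz.
have Lsplit : forall z, Lx m.+1 x z -> exists s, inZS Sig s /\ L' (z - sc s y).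
  move=> z [a [ha hz]]; exists (a ord_max); split; first exact: ha.
  exists (fun j => a (widen_ord (leqnSn m) j)); split; first by move=> j; apply: ha.
  have E : forall u v w : M, u - (v + w) = u - w - v by move=> u v w; rewrite opprD addrA addrAC.
  by rewrite comb_recr E in hz.
case: (pselect (exists t c, [/\ inZS Sig t, t != 0, ZSv k c & C (sc t y - comb k c e)]))
  => [[t [c [ht t0 hc hct]]]|hno].
  have sty : L' (sc t y).
    have -> : sc t y = (sc t y - comb k c e) + comb k c e by rewrite subrK.
    case: (sL') => hC hD _; apply: hD; first exact: hC.
    exact: (subm_comb _ _ _ _ sL' hc he).
  have coord_ty : coord k e (sc t y) = c.
    by apply: (coord_uniq _ _ _ bL).
  set valid := fun z s => inZS Sig s /\ L' (z - sc s y).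
  set Psi := fun z s (i : 'I_k) => t * coord k e (z - sc s y) i + s * c i.
  have Psi_ind : forall z s1 s2, valid z s1 -> valid z s2 -> Psi z s1 = Psi z s2.
    move=> z s1 s2 [h1 L1] [h2 L2]; apply/funext => i; rewrite /Psi.
    have h21 : inZS Sig (s2 - s1) by apply: inZSB.
    set d := sc (s2 - s1) y.
    have dE : z - sc s1 y = d + (z - sc s2 y).
      have G : forall u a b : M, (b - a) + (u - b) = u - a.
        by move=> u a b; rewrite addrC addrA subrK.
      by rewrite /d scBl // G.
    have Ld : L' d.
      have -> : d = (z - sc s1 y) - (z - sc s2 y) by rewrite dE addrK.
      exact: subm_B.
    have e1 : coord k e (sc t d) = (fun i => t * coord k e d i) := coordZ _ _ _ sL' bL _ _ ht Ld.
    have e2 : sc t d = sc (s2 - s1) (sc t y) by rewrite /d !scA // mulrC.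
    have e3 : coord k e (sc (s2 - s1) (sc t y)) = (fun i => (s2 - s1) * c i).
      by rewrite (coordZ _ _ _ sL' bL) // coord_ty.
    have hti : t * coord k e d i = (s2 - s1) * c i.
      by have := congr1 (fun f => f i) e1; rewrite e2 e3 /= => <-.
    rewrite dE (coordD _ _ _ sL' bL) // mulrDr hti; ring.
  pose s z := epsilon (inhabits 0) (fun s => valid z s).
  have s_spec : forall z, Lx m.+1 x z -> valid z (s z).
    move=> z Lz; exact: (epsilon_spec (inhabits 0) (fun s => valid z s) (Lsplit z Lz)).
  pose psi (j : nat) z := if (insub j : option 'I_k) is Some i then Psi z (s z) i else 0.
  have insE : forall i : 'I_k, (insub (i : nat) : option 'I_k) = Some i.
    by move=> i; apply: valK.
  have psiE : forall z s0 (i : 'I_k), Lx m.+1 x z -> valid z s0 -> psi i z = Psi z s0 i.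
    move=> z s0 i Lz v0; rewrite /psi insE (Psi_ind z (s z) s0) //; exact: s_spec.
  have jcase : forall j : nat, (insub j : option 'I_k) = None \/ exists i : 'I_k, j = i.
    move=> j; case: (ltnP j k) => h; first by right; exists (Ordinal h).
    by left; apply: insubF; rewrite ltnNge h.
  have psiN : forall j z, (insub j : option 'I_k) = None -> psi j z = 0.
    by move=> j z h; rewrite /psi h.
  have [LC LD LS] := subm_Lx m.+1 x.
  have [L'C L'D L'S] := sL'.
  have vD : forall z1 z2 s1 s2, valid z1 s1 -> valid z2 s2 -> valid (z1 + z2) (s1 + s2).
    move=> z1 z2 s1 s2 [h1 L1] [h2 L2]; split; first exact: inZSD.
    by rewrite scDl // G5; apply: L'D.
  have vZ : forall a z s0, inZS Sig a -> valid z s0 -> valid (sc a z) (a * s0).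
    move=> a z s0 ha [h0 L0]; split; first exact: inZSM.
    by rewrite -scA // -scBr //; apply: L'S.
  have v0 : forall z, C z -> valid z 0.
    move=> z Cz; split; first exact: inZS0.
    by rewrite sc0l subr0; apply: L'C.
  apply: (thmA k (Lx m.+1 x) psi (subm_Lx _ _)).
  - move=> j z1 z2 L1 L2; case: (jcase j) => [hj|[i ->]].
      by rewrite !psiN // addr0.
    have v1 := s_spec z1 L1; have v2 := s_spec z2 L2.
    rewrite (psiE _ _ _ _ (vD _ _ _ _ v1 v2)); last exact: LD.
    rewrite (psiE _ _ _ L1 v1) (psiE _ _ _ L2 v2) /Psi.
    rewrite scDl; [|exact: v1.1|exact: v2.1].
    rewrite G5 (coordD _ _ _ sL' bL); [|exact: v1.2|exact: v2.2].
    rewrite /=; ring.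
  - move=> j a z ha Lz; case: (jcase j) => [hj|[i ->]].
      by rewrite !psiN // mulr0.
    have v := s_spec z Lz.
    rewrite (psiE _ _ _ _ (vZ _ _ _ ha v)); last exact: LS.
    rewrite (psiE _ _ _ Lz v) /Psi.
    rewrite -scA //; last exact: v.1.
    rewrite -scBr // (coordZ _ _ _ sL' bL) //; last exact: v.2.
    rewrite /=; ring.
  - move=> j z Cz; case: (jcase j) => [hj|[i ->]]; first by rewrite psiN.
    rewrite (psiE _ _ _ (LC _ Cz) (v0 _ Cz)) /Psi sc0l subr0 (coordC _ _ _ sL' bL) //.
    by rewrite mulr0 mul0r addr0.
  - move=> j z Lz; case: (jcase j) => [hj|[i ->]]; first by rewrite psiN //; apply: inZS0.
    have v := s_spec z Lz.
    rewrite (psiE _ _ _ Lz v) /Psi; apply: inZSD; apply: inZSM => //; last exact: v.1.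
    exact: (coordZS _ _ _ bL _ v.2).
  - move=> z Lz hall.
    have [hs0 Lw] := s_spec z Lz.
    set s0 := s z in hs0 Lw.
    set w := z - sc s0 y in Lw.
    set cw := coord k e w.
    have hcw : ZSv k cw := coordZS _ _ _ bL _ Lw.
    have P0 : forall i, t * cw i = (- s0) * c i.
      move=> i; have := hall i (ltn_ord i).
      rewrite (psiE _ _ _ Lz (conj hs0 Lw)) /Psi -/w -/cw => /eqP.
      by rewrite addr_eq0 => /eqP ->; rewrite mulNr.
    have zE : z = w + sc s0 y by rewrite /w subrK.
    clearbody w.
    apply: (Csat t z ht t0).
    have e1 : sc t (comb k cw e) = - sc s0 (comb k c e).
      rewrite -(combM _ _ _ _ ht hcw).
      have -> : (fun i => t * cw i) = (fun i => (- s0) * c i) by apply/funext => i; apply: P0.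
      by rewrite combM ?scNl //; apply: inZSN.
    have L1 : sc t (sc s0 y) = sc s0 (sc t y) by rewrite !scA // mulrC.
    have -> : sc t z = sc t (w - comb k cw e) + sc s0 (sc t y - comb k c e).
      rewrite {1}zE scDr // L1 scBr // e1 opprK scBr //.
      exact: G4.
    apply: CD; apply: Csc => //.
    exact: (coord_eq _ _ _ bL _ Lw).
exists k.+1, (ext e y); split.
- move=> i; case: (ord_cases _ i) => [[j ->]|->]; rewrite ?ext_widen ?ext_max.
    exact: (L'sub _ (he j)).
  exact: Lx_gen.
- move=> z [a [ha hz]].
  set w := comb m (fun j => a (widen_ord (leqnSn m) j)) x'.
  have Lw : L' w.
    exists (fun j => a (widen_ord (leqnSn m) j)); split; first by move=> j; apply: ha.
    by rewrite subrr.
  have [c [hc Cc]] := hs w Lw.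
  exists (ext c (a ord_max)); split; first exact: ZSv_ext.
  rewrite comb_ext (G2 _ _ w).
  apply: CD => //.
  by rewrite comb_recr in hz.
- move=> c hc Cc.
  rewrite comb_recr in Cc.
  set c' := fun j => c (widen_ord (leqnSn k) j) in Cc.
  have eE : (fun j => ext e y (widen_ord (leqnSn k) j)) = e.
    by apply/funext => j; rewrite ext_widen.
  rewrite eE ext_max in Cc.
  have hc' : ZSv k c' by move=> j; apply: hc.
  case: (eqVneq (c ord_max) 0) => [t0|t0]; last first.
    exfalso; apply: hno; exists (- c ord_max), c'; split => //.
    + by apply: inZSN.
    + by rewrite oppr_eq0.
    + rewrite scNl // -opprD addrC; exact: CN.
  rewrite t0 sc0l addr0 in Cc.
  have := hi c' hc' Cc => hz i.
  by case: (ord_cases _ i) => [[j ->]|->] //; apply: hz.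
Qed.


Lemma main_alg m (xs : 'I_m -> M) (U : set M) : (forall z, Lx m xs z) ->
  (forall x, U x -> C x) -> (forall x, nbhs x [set y | U (y - x)]) ->
  exists (k : nat) (f : M -> 'I_k -> rat) (g : M -> M)
         (Psi : ('I_k -> rat) -> M -> M),
    [/\ forall x, (forall i, inZS Sig (f x i)) /\ C (g x),
        (forall x y i, f (x + y) i = f x i + f y i) /\
        (forall x y, g (x + y) = g x + g y) /\
        (forall a x, inZS Sig a ->
          (forall i, f (sc a x) i = a * f x i) /\ g (sc a x) = sc a (g x)),
        (forall x, Psi (f x) (g x) = x) /\
        (forall v c, (forall i, inZS Sig (v i)) -> C c ->
          f (Psi v c) = v /\ g (Psi v c) = c),
        (forall x, \forall y \near x, f y = f x) /\ continuous g &
        forall v, (forall i, inZS Sig (v i)) -> {within C, continuous (Psi v)}].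
Proof.
move=> hall UC nbU.
have sL := subm_Lx m xs.
have [k [e bL]] := gens m xs.
set f := coord k e.
have fZS : forall x, ZSv k (f x) by move=> x; exact: (coordZS _ _ _ bL _ (hall x)).
have fD : forall x y, f (x + y) = (fun i => f x i + f y i).
  by move=> x y; apply: (coordD _ _ _ sL bL).
have fZ : forall a x, inZS Sig a -> f (sc a x) = (fun i => a * f x i).
  by move=> a x ha; apply: (coordZ _ _ _ sL bL).
have fC : forall c, C c -> f c = (fun _ => 0).
  by move=> c Cc; apply: (coordC _ _ _ sL bL).
have floc : forall x, \forall y \near x, f y = f x.
  move=> x; apply: filterS (nbU x) => y /= Uy.
  have -> : y = x + (y - x) by rewrite addrC subrK.
  rewrite fD (fC (y - x) (UC _ Uy)).
  by apply/funext => i; rewrite addr0.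
exists k, f, (fun x => x - comb k (f x) e), (fun v c => comb k v e + c).
split.
- move=> x; split; first exact: fZS.
  exact: (coord_eq _ _ _ bL _ (hall x)).
- split; first by move=> x y i; rewrite fD.
  split.
    move=> x y; rewrite fD combD ?G5 //.
  move=> a x ha; split; first by move=> i; rewrite fZ.
  rewrite fZ // combM // scBr //.
- split; first by move=> x; rewrite addrC subrK.
  move=> v c hv Cc.
  have fv : f (comb k v e + c) = v.
    apply: (coord_uniq _ _ _ bL); [exact: hall|exact: hv|].
    by rewrite addrC addKr.
  by rewrite fv; split => //; rewrite addrC addKr.
- split; first exact: floc.
  move=> x.
  have E : {near x, (fun y => y - comb k (f x) e) =1 (fun y => y - comb k (f y) e)}.
    by apply: filterS (floc x) => y /= ->.
  apply: cvg_trans (near_eq_cvg E) _.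
  exact: (@addc_continuous M (- comb k (f x) e) x).
- move=> v hv; apply: continuous_subspaceT => c.
  have -> : (fun c => comb k v e + c) = (fun c => c + comb k v e).
    by apply/funext => y; rewrite addrC.
  exact: (@addc_continuous M (comb k v e) c).
Qed.

End Alg.

Lemma fin_cover (T : topologicalType) (K : set T) (V : T -> set T) :
  compact K -> (forall k, nbhs k (V k)) ->
  exists s : seq T, forall k, K k -> exists2 x, x \in s & V x k.
Proof.
move=> Kc hV; case: (pselect (exists s : seq T, forall k, K k -> exists2 x, x \in s & V x k)) => // hno.
exfalso.
pose B (s : seq T) := K `\` [set k | exists2 x, x \in s & V x k].
have FF : Filter (filter_from setT B).
  apply: filter_from_filter; first by exists [::].
  move=> s1 s2 _ _; exists (s1 ++ s2) => // k [Kk nk].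
  by split; split => // -[x xs Vx]; apply: nk; exists x => //; rewrite mem_cat xs ?orbT.
have PF : ProperFilter (filter_from setT B).
  apply: (@filter_from_proper _ _ setT B FF) => s _.
  apply/set0P/negP => /eqP B0; apply: hno; exists s => k Kk.
  case: (pselect (exists2 x, x \in s & V x k)) => // nk.
  have : B s k by split.
  by rewrite B0.
have FK : filter_from setT B K by exists [::] => // k [].
have [p [Kp cp]] := Kc _ PF FK.
have [k [[Kk nk] Vk]] := cp (B [:: p]) (V p) (ex_intro2 _ _ [:: p] I (fun _ h => h)) (hV p).
by apply: nk; exists p => //; rewrite inE.
Qed.

Theorem mainTheorem12 (Sig : set nat) (M : topologicalZmodType)
    (sc : rat -> M -> M) :
  (forall p, Sig p -> prime p) ->
  hausdorff_space M ->
  ZSmodule Sig sc ->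
  loc_compact M ->
  has_compact_open_subgroup M ->
  ZS_compactly_generated Sig sc ->
  exists (k : nat) (f : M -> 'I_k -> rat) (g : M -> M)
         (Psi : ('I_k -> rat) -> M -> M),
    [/\ (* Phi maps into Z[S^-1]^k x C(M) *)
        forall x, (forall i, inZS Sig (f x i)) /\ CM (g x),
        (* Phi is Z[S^-1]-linear *)
        (forall x y i, f (x + y) i = f x i + f y i) /\
        (forall x y, g (x + y) = g x + g y) /\
        (forall a x, inZS Sig a ->
          (forall i, f (sc a x) i = a * f x i) /\ g (sc a x) = sc a (g x)),
        (* Psi is a two-sided inverse of Phi *)
        (forall x, Psi (f x) (g x) = x) /\
        (forall v c, (forall i, inZS Sig (v i)) -> CM c ->
          f (Psi v c) = v /\ g (Psi v c) = c),
        (* Phi continuous (f locally constant: discrete target) *)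
        (forall x, \forall y \near x, f y = f x) /\ continuous g &
        (* Psi continuous (first factor discrete) *)
        forall v, (forall i, inZS Sig (v i)) -> {within CM, continuous (Psi v)}].
Proof.
move=> SigP hM Z _ [U [Uc Uo U0 UB]] [K [Kc Kgen]].
have toCp : forall x, CM x -> Cp U x := fun x => @CM_Cp M U Uo U0 UB x.
have ofCp : forall x, Cp U x -> CM x := fun x => @Cp_CM M U hM Uc U0 UB x.
have C0 : CM (0 : M) by apply: ofCp; exact: Cp0.
have CB : forall x y : M, CM x -> CM y -> CM (x - y).
  by move=> x y hx hy; apply: ofCp; apply: CpB => //; apply: toCp.
have Csc : forall a (x : M), inZS Sig a -> CM x -> CM (sc a x).
  by move=> a x ha hx; apply: ofCp; apply: (Cp_sc Z hM Uc Uo U0 UB ha); apply: toCp.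
have Csat : forall a (x : M), inZS Sig a -> a != 0 -> CM (sc a x) -> CM x.
  by move=> a x ha a0 hx; apply: ofCp; apply: (Cp_sat Z hM Uc Uo U0 UB ha a0); apply: toCp.
have UC : forall x : M, U x -> CM x by move=> x hx; apply: ofCp; apply: CpU.
have [s hs] := fin_cover _ _ _ Kc (nbhsU Uo U0).
pose xs := fun i : 'I_(size s) => nth 0 s i.
have sLx := subm_Lx Sig M sc CM Z C0 CB Csc (size s) xs.
have hall : forall z, Lx Sig M sc CM (size s) xs z.
  have [LC LD LS] := sLx.
  move=> z; have [n [a [k [ha hk ->]]]] := Kgen z.
  apply: (subm_sum Sig M sc CM C0 _ n _ sLx) => i.
  apply: LS => //.
  have [x xs_in Ux] := hs (k i) (hk i).
  have hi : (index x s < size s)%N by rewrite index_mem.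
  have -> : k i = xs (Ordinal hi) + (k i - x) by rewrite /xs /= nth_index // addrC subrK.
  apply: LD; first exact: Lx_gen.
  by apply: LC; apply: UC.
exact: (main_alg Sig M sc CM Z C0 CB Csc Csat (size s) xs U hall UC (nbhsU Uo U0)).
Qed.
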